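(* Let $Y\in\mathbb{R}^{n\times p}$. Suppose either (i) $Y$ is 1-critical for (BM) with a multiplier $\lambda$ (as in the definition of 1-criticality) satisfying $S(\lambda)\in\mathbb{S}^n_+$, or (ii) $Y$ is 2-critical for (BM) and $Y$ is column rank deficient (i.e. $\operatorname{rank} Y<p$). Then $Y$ is a global minimizer of (BM).
   Context: Let $\mathbb{S}^n$ be the space of real symmetric $n\times n$ matrices, with inner product $A\bullet B=\operatorname{trace}(A^TB)$ (also used for $A\in\mathbb{S}^n$, $B\in\mathbb{R}^{n\times n}$), and $\mathbb{S}^n_+$ the cone of positive semidefinite matrices. Let $m=m_1+m_2$, let $C,A_1,\dots,A_m\in\mathbb{S}^n$, $b\in\mathbb{R}^m$, $\mathcal{A}^*(\lambda)=\sum_i\lambda_iA_i$. Let $\mathscr{X}=\{X\in\mathbb{S}^n_+ : A_i\bullet X=b_i \ (i\le m_1),\ A_i\bullet X\ge b_i\ (m_1<i\le m)\}$; assume $\mathscr{X}$ is nonempty and that $\min_{X\in\mathscr{X}} C\bullet X$ is attained. Problem (BM) is $\min_{Y\in\mathbb{R}^{n\times p}} C\bullet YY^T$ subject to $YY^T\in\mathscr{X}$. For $Y$, let $I(Y)=\{i: A_i\bullet YY^T=b_i\}$ and $S(\lambda)=C-\mathcal{A}^*(\lambda)$. A point $Y$ is 1-critical for (BM) with multiplier $\lambda$ if $YY^T\in\mathscr{X}$, $\lambda\in\mathbb{R}^{m_1}\times\mathbb{R}^{m_2}_+$, $\lambda_i=0$ for $i\notin I(Y)$ and $S(\lambda)Y=0$;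 it is 2-critical if moreover $S(\lambda)\bullet UU^T\ge 0$ for all $U\in\mathbb{R}^{n\times p}$ with $A_i\bullet UY^T=0$ for all $i\in I(Y)$. *)

(* Defs.v *)
From mathcomp Require Import reals.
From mathcomp Require Import all_boot all_order all_algebra.
Set Implicit Arguments. Unset Strict Implicit. Unset Printing Implicit Defensive.
Import Order.TTheory GRing.Theory Num.Theory.
Local Open Scope ring_scope.

Section BM.
Variable R : realType.

Definition mdot n (A B : 'M[R]_n) : R := \tr (A^T *m B).

Definition symm_mx n (A : 'M[R]_n) : Prop := A^T = A.

Definition psd n (X : 'M[R]_n) : Prop :=
  symm_mx X /\ forall x : 'cV[R]_n, 0 <= (x^T *m X *m x) 0 0.

(* constraint i is an equality iff i < m1 *)
Definition feasible n m1 m2 (A : 'I_(m1 + m2) -> 'M[R]_n) (b : 'I_(m1 + m2) -> R)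
  (X : 'M[R]_n) : Prop :=
  psd X /\ forall i : 'I_(m1 + m2),
    if (i < m1)%N then mdot (A i) X = b i else b i <= mdot (A i) X.

Definition active n m1 m2 (A : 'I_(m1 + m2) -> 'M[R]_n) (b : 'I_(m1 + m2) -> R)
  p (Y : 'M[R]_(n, p)) (i : 'I_(m1 + m2)) : Prop :=
  mdot (A i) (Y *m Y^T) = b i.

Definition Smat n m (C : 'M[R]_n) (A : 'I_m -> 'M[R]_n) (lam : 'I_m -> R) : 'M[R]_n :=
  C - \sum_(i < m) lam i *: A i.

Definition one_critical n m1 m2 (C : 'M[R]_n) (A : 'I_(m1 + m2) -> 'M[R]_n)
  (b : 'I_(m1 + m2) -> R) p (Y : 'M[R]_(n, p)) (lam : 'I_(m1 + m2) -> R) : Prop :=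
  [/\ feasible A b (Y *m Y^T),
      (forall i : 'I_(m1 + m2), (m1 <= i)%N -> 0 <= lam i),
      (forall i, ~ active A b Y i -> lam i = 0)
    & Smat C A lam *m Y = 0].

(* A_i • U Y^T, with the trace inner product extended to non-symmetric matrices *)
Definition two_critical n m1 m2 (C : 'M[R]_n) (A : 'I_(m1 + m2) -> 'M[R]_n)
  (b : 'I_(m1 + m2) -> R) p (Y : 'M[R]_(n, p)) (lam : 'I_(m1 + m2) -> R) : Prop :=
  one_critical C A b Y lam /\
  forall U : 'M[R]_(n, p),
    (forall i, active A b Y i -> mdot (A i) (U *m Y^T) = 0) ->
    0 <= mdot (Smat C A lam) (U *m U^T).

Definition global_min_BM n m1 m2 (C : 'M[R]_n) (A : 'I_(m1 + m2) -> 'M[R]_n)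
  (b : 'I_(m1 + m2) -> R) p (Y : 'M[R]_(n, p)) : Prop :=
  feasible A b (Y *m Y^T) /\
  forall Z : 'M[R]_(n, p), feasible A b (Z *m Z^T) ->
    mdot C (Y *m Y^T) <= mdot C (Z *m Z^T).

End BM.

(* Main.v *)
Require Import Defs.
From mathcomp Require Import all_boot all_order all_algebra.
From mathcomp Require Import reals.
From Stdlib Require Import Classical.
Import Order.TTheory GRing.Theory Num.Theory.
Local Open Scope ring_scope.
Set Implicit Arguments. Unset Strict Implicit.

Section Aux.
Variable R : realType.

Lemma mdotD n (A B M : 'M[R]_n) : mdot (A + B) M = mdot A M + mdot B M.
Proof. by rewrite /mdot linearD mulmxDl mxtraceD. Qed.

Lemma mdotZ n c (A M : 'M[R]_n) : mdot (c *: A) M = c * mdot A M.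
Proof. by rewrite /mdot linearZ -scalemxAl mxtraceZ. Qed.

Lemma mdot_sum n m (F : 'I_m -> 'M[R]_n) M :
  mdot (\sum_(i < m) F i) M = \sum_(i < m) mdot (F i) M.
Proof.
elim/big_rec2: _ => [|i y1 y2 _ <-]; last by rewrite mdotD.
by rewrite /mdot linear0 mul0mx /mxtrace big1 // => i _; rewrite mxE.
Qed.

Lemma quad_entry n p (S : 'M[R]_n) (Z : 'M[R]_(n, p)) j :
  (Z^T *m S *m Z) j j = ((col j Z)^T *m S *m col j Z) 0 0.
Proof.
rewrite !mxE; apply: eq_bigr => k _; rewrite !mxE; congr (_ * _).
by apply: eq_bigr => l _; rewrite !mxE.
Qed.

Lemma psd_mdot n p (S : 'M[R]_n) (Z : 'M[R]_(n, p)) :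
  psd S -> 0 <= mdot S (Z *m Z^T).
Proof.
move=> [HS Hq]; rewrite /mdot HS mulmxA mxtrace_mulC mulmxA.
rewrite /mxtrace; apply: sumr_ge0 => j _; rewrite quad_entry; exact: Hq.
Qed.

Lemma mdotSY n p (S : 'M[R]_n) (Y : 'M[R]_(n, p)) :
  symm_mx S -> S *m Y = 0 -> mdot S (Y *m Y^T) = 0.
Proof.
by move=> HS HY; rewrite /mdot HS mulmxA HY mul0mx /mxtrace big1 // => i _; rewrite mxE.
Qed.

Lemma case_i n m1 m2 (C : 'M[R]_n) (A : 'I_(m1 + m2) -> 'M[R]_n)
  (b : 'I_(m1 + m2) -> R) p (Y : 'M[R]_(n, p)) lam :
  one_critical C A b Y lam -> psd (Smat C A lam) -> global_min_BM C A b Y.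
Proof.
move=> [HF Hpos Hact HSY] HS; split => // Z [HZ1 HZ2].
have HC : C = Smat C A lam + \sum_(i < m1 + m2) lam i *: A i by rewrite /Smat subrK.
move: HC HS HSY; move: (Smat C A lam) => S HC HS HSY.
rewrite HC !mdotD (mdotSY HS.1 HSY) add0r !mdot_sum.
rewrite -[X in X <= _]add0r; apply: lerD; first exact: psd_mdot.
apply: ler_sum => i _; rewrite !mdotZ.
have Hb : lam i * mdot (A i) (Y *m Y^T) = lam i * b i.
  have [Ha|Hna] := classic (active A b Y i); first by rewrite Ha.
  by rewrite (Hact i Hna) !mul0r.
rewrite Hb; move: (HZ2 i); case: ifP => Hi.
  by move=> ->.
move=> Hle; apply: ler_wpM2l => //; apply: Hpos; by rewrite leqNgt Hi.
Qed.

Lemma kernel_vec n p (Y : 'M[R]_(n, p)) :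
  (\rank Y < p)%N -> exists2 w : 'rV[R]_p, w *m Y^T = 0 & w != 0.
Proof.
move=> Hr.
have : kermx Y^T != 0.
  by rewrite -mxrank_eq0 mxrank_ker mxrank_tr -lt0n subn_gt0.
case/rowV0Pn => w /sub_kermxP Hw Hw0; by exists w.
Qed.

Lemma norm2_gt0 p (w : 'rV[R]_p) : w != 0 -> 0 < (w *m w^T) 0 0.
Proof.
move=> Hw; rewrite mxE lt_def; apply/andP; split; last first.
  by apply: sumr_ge0 => j _; rewrite mxE -expr2 sqr_ge0.
apply/negP => /eqP H0; move/negP: Hw; apply; apply/eqP/rowP => j.
have : w 0 j * w^T j 0 = 0.
  have Hnn : forall k : 'I_p, true -> 0 <= w 0 k * w^T k 0.
    by move=> k _; rewrite mxE -expr2 sqr_ge0.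
  by have := psumr_eq0P Hnn H0; apply.
by move=> /eqP; rewrite !mxE mulf_eq0 orbb => /eqP ->.
Qed.

Lemma case_ii n m1 m2 (C : 'M[R]_n) (A : 'I_(m1 + m2) -> 'M[R]_n)
  (b : 'I_(m1 + m2) -> R) p (Y : 'M[R]_(n, p)) lam :
  symm_mx C -> (forall i, symm_mx (A i)) ->
  two_critical C A b Y lam -> (\rank Y < p)%N -> psd (Smat C A lam).
Proof.
move=> HC HA [H1 H2] Hr.
have HS : symm_mx (Smat C A lam).
  rewrite /symm_mx /Smat linearB /= HC linear_sum /=; congr (_ - _).
  by apply: eq_bigr => i _; rewrite linearZ /= HA.
split => // x.
have [w Hw Hw0] := kernel_vec Hr.
have := H2 (x *m w).
have HU : x *m w *m Y^T = 0 by rewrite -mulmxA Hw mulmx0.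
rewrite HU; have Hm0 : forall M : 'M[R]_n, mdot M 0 = 0.
  by move=> M; rewrite /mdot mulmx0 linear0.
move=> /(_ (fun i _ => Hm0 _)).
rewrite trmx_mul mulmxA -(mulmxA x) [w *m w^T]mx11_scalar mul_mx_scalar.
rewrite -scalemxAl /mdot -scalemxAr mxtraceZ mulmxA mxtrace_mulC mulmxA trace_mx11 HS.
by rewrite pmulr_rge0 // norm2_gt0.
Qed.
End Aux.

Theorem lemma4 (R : realType) (n p m1 m2 : nat)
  (C : 'M[R]_n) (A : 'I_(m1 + m2) -> 'M[R]_n) (b : 'I_(m1 + m2) -> R)
  (HC : symm_mx C) (HA : forall i, symm_mx (A i))
  (Hne : exists X : 'M[R]_n, feasible A b X)
  (Hattain : exists2 X : 'M[R]_n, feasible A b X &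
     forall X' : 'M[R]_n, feasible A b X' -> mdot C X <= mdot C X')
  (Y : 'M[R]_(n, p)) :
  ((exists lam : 'I_(m1 + m2) -> R, one_critical C A b Y lam /\ psd (Smat C A lam))
   \/ ((exists lam : 'I_(m1 + m2) -> R, two_critical C A b Y lam) /\ (\rank Y < p)%N)) ->
  global_min_BM C A b Y.
Proof.
case=> [[lam [H1 H2]]|[[lam H] Hr]]; first exact: (case_i H1 H2).
apply: (case_i H.1); exact: (case_ii HC HA H Hr).
Qed.
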